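(* Fix real $a$, $b>0$, $c>0$ and a prior $F$ with support $[\alpha,\beta]\subset(0,c)$ and positive variance. Let $x^u(\theta)=k\theta+d$ be the unique symmetric Bayesian Nash equilibrium of the affine relaxation (for $a=0$, $x^u(\theta)=(c-\theta)/(2b)$), and assume it is fully active, i.e. $x^u(\beta)\ge0$. Let $\underline x=x^u(\beta)$, $\overline x=x^u(\alpha)$. If $$\overline x\le\frac1\alpha,\qquad a\le b\alpha,\qquad c\alpha^2-2b\alpha+a\ge0,\qquad \min_{y\in[\underline x,\overline x]}\Bigl(\tfrac12-cy+by^2\Bigr)\ge0,$$ then $x^u$ is a symmetric Bayesian Nash equilibrium of the truncated Bayesian contest.
   Context: Let $P(x,y)=\tfrac12+(x-y)\bigl(c-b(x+y)+axy\bigr)$ and $\bar P=\min\{1,\max\{0,P\}\}$. Types are i.i.d. from $F$. In the affine relaxation, actions are real numbers and a type-$\theta$ player choosing $\tilde x$ against opponent strategy $x(\cdot)$ receives $\int[P(\tilde x,x(\theta'))-\theta\tilde x]\,dF(\theta')$. In the truncated Bayesian contest, actions are efforts in $[0,\infty)$ and the payoff is $\int[\bar P(\tilde x,x(\theta'))-\theta\tilde x]\,dF(\theta')$. *)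

(* Defs.v *)
From HB Require Import structures.
From mathcomp Require Import all_boot all_order all_algebra.
From mathcomp Require Import all_classical all_reals all_analysis.
Set Implicit Arguments. Unset Strict Implicit. Unset Printing Implicit Defensive.
Import Order.TTheory GRing.Theory Num.Theory.
Import numFieldNormedType.Exports.
Local Open Scope classical_set_scope.
Local Open Scope ring_scope.

Section Contest.
Variable R : realType.

Definition Pwin (a b c x y : R) : R :=
  2^-1 + (x - y) * (c - b * (x + y) + a * x * y).

Definition Pbar (a b c x y : R) : R :=
  Num.min 1 (Num.max 0 (Pwin a b c x y)).

Definition payoff_aff (F : probability R R) (a b c : R) (x : R -> R)
  (theta xt : R) : R :=
  Rintegral F [set: R] (fun t => Pwin a b c xt (x t) - theta * xt).

Definition payoff_trunc (F : probability R R) (a b c : R) (x : R -> R)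
  (theta xt : R) : R :=
  Rintegral F [set: R] (fun t => Pbar a b c xt (x t) - theta * xt).

Definition support_is (F : probability R R) (al be : R) : Prop :=
  F `[al, be]%classic = 1%E /\
  forall t, al <= t <= be -> forall e : R, 0 < e -> (0 < F (ball t e))%E.

Definition type_mean (F : probability R R) : R := Rintegral F [set: R] (fun t => t).
Definition type_variance (F : probability R R) : R :=
  Rintegral F [set: R] (fun t => (t - type_mean F) ^+ 2).

Definition sym_BNE_affine (F : probability R R) (al be a b c : R)
  (x : R -> R) : Prop :=
  forall theta, al <= theta <= be ->
    forall xt : R, payoff_aff F a b c x theta xt <= payoff_aff F a b c x theta (x theta).

Definition sym_BNE_trunc (F : probability R R) (al be a b c : R)
  (x : R -> R) : Prop :=
  forall theta, al <= theta <= be ->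
    0 <= x theta /\
    forall xt : R, 0 <= xt ->
      payoff_trunc F a b c x theta xt <= payoff_trunc F a b c x theta (x theta).

End Contest.

(* Main.v *)
Require Import Defs.
From mathcomp Require Import all_boot all_order all_algebra.
From mathcomp Require Import all_classical all_reals all_analysis.
From mathcomp Require Import ring lra measurable_realfun.
Import Order.TTheory GRing.Theory Num.Theory.
Import numFieldNormedType.Exports.
Local Open Scope classical_set_scope.
Local Open Scope ring_scope.

Section S.
Variable R : realType.
Variable F : probability R R.
Variables al be : R.
Hypothesis hF : F `[al, be]%classic = 1%E.

Lemma transfer (f : R -> R) (M : R) : measurable_fun setT f ->
  (forall t, al <= t <= be -> `|f t| <= M) ->
  F.-integrable `[al, be]%classic (EFin \o f) /\
  Rintegral F setT f = Rintegral F `[al, be]%classic f.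
Proof.
move=> mf hM.
have mI : measurable (`[al, be]%classic : set R) by exact: measurable_itv.
have N0 : F (~` `[al, be]%classic) = 0%E.
  by rewrite probability_setC //; move: hF => /= ->; rewrite subee.
have eI : setT `\` ~` `[al, be]%classic = (`[al, be]%classic : set R).
  by rewrite setTD setCK.
have intI : F.-integrable `[al, be]%classic (EFin \o f).
  apply: measurable_bounded_integrable => //.
  - by move: hF => /= ->; rewrite ltry.
  - exact: measurable_funS mf.
  - exists M; split; first exact: num_real.
    move=> M' hM' t /= At; apply: le_trans (ltW hM').
    by apply: hM; move: At; rewrite /= in_itv /=.
split => //.
have mN : measurable (~` `[al, be]%classic : set R) by exact: measurableC.
have intT : F.-integrable setT (EFin \o f).
  rewrite (negligible_integrable _ _ _ N0) //; first by rewrite eI.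
  exact/measurable_realfun.measurable_EFinP.
rewrite /Rintegral (negligible_integral _ _ intT N0) // eI //.
Qed.

Lemma decomp (g : R -> R) (M r : R) : measurable_fun setT g ->
  (forall t, al <= t <= be -> `|g t| <= M) ->
  F.-integrable `[al, be]%classic (EFin \o g) /\
  Rintegral F setT (fun t => g t - r) = Rintegral F `[al, be]%classic g - r.
Proof.
move=> mg hM.
have mI : measurable (`[al, be]%classic : set R) by exact: measurable_itv.
have [ig _] := transfer _ _ mg hM.
split => //.
have mgr : measurable_fun setT (fun t => g t - r).
  by apply: measurable_funB => //; exact: measurable_cst.
have hb : forall t, al <= t <= be -> `|g t - r| <= M + `|r|.
  move=> t ht; apply: le_trans (ler_normB _ _) _.
  by rewrite lerD2r hM.
have [_ ->] := transfer _ _ mgr hb.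
rewrite RintegralB //; last exact: finite_measure_integrable_cst.
by rewrite Rintegral_cst //; move: hF => /= ->; rewrite /= mulr1.
Qed.

Lemma quad_meas (A B C : R) : measurable_fun setT (fun t : R => A + B * t + C * t ^+ 2).
Proof.
apply: measurable_funD; first apply: measurable_funD.
- exact: measurable_cst.
- apply: measurable_funM; [exact: measurable_cst| exact: measurable_id].
- apply: measurable_funM; first exact: measurable_cst.
  by apply: measurable_funX; exact: measurable_id.
Qed.

Lemma quad_bound (A B C : R) : 0 <= al -> forall t, al <= t <= be ->
  `|A + B * t + C * t ^+ 2| <= `|A| + `|B| * be + `|C| * be ^+ 2.
Proof.
move=> al0 t /andP[h1 h2].
have t0 : 0 <= t by exact: le_trans h1.
apply: le_trans (ler_normD _ _) _; apply: lerD.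
  apply: le_trans (ler_normD _ _) _; apply: lerD => //.
  by rewrite normrM (ger0_norm t0) ler_wpM2l.
rewrite normrM normrX (ger0_norm t0) ler_wpM2l //.
by rewrite lerXn2r // ?nnegrE // (le_trans t0).
Qed.


Lemma inI (t : R) : (`[al, be]%classic : set R) t -> al <= t <= be.
Proof. by rewrite /= in_itv. Qed.

End S.

Section Alg.
Variable R : realType.
Variables a b c al : R.
Hypotheses (b0 : 0 < b) (al0 : 0 < al) (hab : a <= b * al)
  (hc : 0 <= c * al ^+ 2 - 2 * b * al + a).

Let Z := al^-1.
Lemma alZ : al * Z = 1. Proof. by rewrite /Z mulfV // gt_eqF. Qed.
Lemma Z0 : 0 < Z. Proof. by rewrite /Z invr_gt0. Qed.

Lemma leZ x : x <= Z -> al * x <= 1.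
Proof. by move=> h; rewrite -alZ ler_wpM2l // ltW. Qed.

Lemma m_ge0 x y : 0 <= x <= Z -> 0 <= y <= Z -> 0 <= c - b * (x + y) + a * x * y.
Proof.
move=> /andP[x0 xZ] /andP[y0 yZ].
have u1 := leZ _ xZ; have v1 := leZ _ yZ.
set u := al * x; set v := al * y.
have u0 : 0 <= u by rewrite mulr_ge0 // ltW.
have v0 : 0 <= v by rewrite mulr_ge0 // ltW.
have CB : 0 <= c * al ^+ 2 - b * al by move: hab hc; lra.
have p1 : 0 <= (1 - u) * (1 - v) * (c * al ^+ 2).
  have ba : 0 <= b * al by rewrite mulr_ge0 // ltW.
  apply: mulr_ge0; last lra.
  by apply: mulr_ge0; rewrite subr_ge0.
have p2 : 0 <= (u * (1 - v) + (1 - u) * v) * (c * al ^+ 2 - b * al).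
  by rewrite mulr_ge0 // addr_ge0 // mulr_ge0 // subr_ge0.
have p3 : 0 <= u * v * (c * al ^+ 2 - 2 * b * al + a) by apply: mulr_ge0 => //; apply: mulr_ge0.
have e : al ^+ 2 * (c - b * (x + y) + a * x * y) =
  (1 - u) * (1 - v) * (c * al ^+ 2) + (u * (1 - v) + (1 - u) * v) * (c * al ^+ 2 - b * al)
  + u * v * (c * al ^+ 2 - 2 * b * al + a) by rewrite /u /v; ring.
have : 0 <= al ^+ 2 * (c - b * (x + y) + a * x * y) by rewrite e; lra.
by rewrite pmulr_rge0 // exprn_gt0.
Qed.

Lemma Pwin_ge0 x y : 0 <= x <= Z -> 0 <= y <= Z -> 0 <= Pwin a b c 0 y ->
  0 <= Pwin a b c x y.
Proof.
move=> hx hy h0.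
have hZ : 0 <= Z <= Z by rewrite lexx ltW // Z0.
have mZ := m_ge0 _ _ hZ hy.
move: hx hy => /andP[x0 xZ] /andP[y0 yZ].
have gZ : 0 <= Pwin a b c Z y.
  rewrite /Pwin; apply: addr_ge0; first by rewrite invr_ge0.
  by rewrite mulr_ge0 // subr_ge0.
have v1 := leZ _ yZ.
have bay : 0 <= b - a * y.
  have -> : b - a * y = (b * al - a) * y + b * (1 - al * y) by ring.
  by rewrite addr_ge0 // mulr_ge0 // ?subr_ge0 // ltW.
have e : Z * Pwin a b c x y = (Z - x) * Pwin a b c 0 y + x * Pwin a b c Z y
   + Z * (b - a * y) * x * (Z - x) by rewrite /Pwin; ring.
have : 0 <= Z * Pwin a b c x y.
  rewrite e; apply: addr_ge0; first apply: addr_ge0.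
  - by rewrite mulr_ge0 // subr_ge0.
  - by rewrite mulr_ge0.
  - by rewrite !mulr_ge0 // ?subr_ge0 // ltW // Z0.
by rewrite pmulr_rge0 // Z0.
Qed.

Lemma Pwin_swap x y : Pwin a b c x y = 1 - Pwin a b c y x.
Proof. by rewrite /Pwin; field. Qed.

End Alg.

Lemma Pbar_bnd (R : realType) (p : R) : 0 <= Num.min 1 (Num.max 0 p) <= 1.
Proof. by rewrite le_min le_max lexx ler01 /= ge_min lexx. Qed.

Lemma Pbar_eq (R : realType) (p : R) : 0 <= p <= 1 -> Num.min 1 (Num.max 0 p) = p.
Proof.
move=> /andP[p0 p1].
by rewrite (max_idPr p0); apply/min_idPr.
Qed.

Lemma Pbar_le (R : realType) (p : R) : 0 <= p -> Num.min 1 (Num.max 0 p) <= p.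
Proof. by move=> p0; rewrite (max_idPr p0) ge_min lexx orbT. Qed.

Arguments Pbar_bnd {R}. Arguments Pbar_eq {R}. Arguments Pbar_le {R}.

Section Quad.
Variable R : realType.
Variables a b c k d : R.

Lemma pw_quad x : exists A B C : R,
  (fun t => Pwin a b c x (k * t + d)) = (fun t => A + B * t + C * t ^+ 2).
Proof.
exists (2^-1 + c * x - b * x ^+ 2 + a * x ^+ 2 * d - c * d + b * d ^+ 2 - a * x * d ^+ 2).
exists (a * x ^+ 2 * k - c * k + 2 * b * k * d - 2 * a * x * k * d).
exists (b * k ^+ 2 - a * x * k ^+ 2).
by apply: funext => t; rewrite /Pwin; ring.
Qed.

Lemma pw_meas x : measurable_fun setT (fun t => Pwin a b c x (k * t + d)).
Proof. by have [A [B [C ->]]] := pw_quad x; exact: quad_meas. Qed.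

Lemma pw_bnd (al be : R) x : 0 <= al -> exists M, forall t, al <= t <= be ->
  `|Pwin a b c x (k * t + d)| <= M.
Proof.
move=> al0; have [A [B [C e]]] := pw_quad x.
exists (`|A| + `|B| * be + `|C| * be ^+ 2) => t ht.
have -> : Pwin a b c x (k * t + d) = A + B * t + C * t ^+ 2.
  by have := congr1 (fun f => f t) e.
exact: (@quad_bound R al be A B C al0 t ht).
Qed.

Lemma pb_meas x : measurable_fun setT (fun t => Pbar a b c x (k * t + d)).
Proof.
rewrite /Pbar.
apply: (measurable_minr (f := cst 1) (g := fun t => Num.max 0 (Pwin a b c x (k * t + d)))).
  exact: measurable_cst.
apply: (measurable_maxr (f := cst 0) (g := fun t => Pwin a b c x (k * t + d))).
  exact: measurable_cst.
exact: pw_meas.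
Qed.

Lemma pb_bnd x t : `|Pbar a b c x (k * t + d)| <= 1.
Proof.
have /andP[h0 h1] := Pbar_bnd (Pwin a b c x (k * t + d)).
by rewrite /Pbar ger0_norm.
Qed.

End Quad.
Arguments pw_bnd {R}. Arguments pw_meas {R}. Arguments pb_meas {R}. Arguments pb_bnd {R}.
Arguments Pwin_ge0 {R a b c al} b0 al0 hab hc {x y}.
Arguments inI {R al be t}.

Theorem proposition10 (R : realType) (a b c : R) (F : probability R R)
  (al be k d : R) :
  0 < b -> 0 < c ->
  0 < al -> al <= be -> be < c ->
  support_is F al be ->
  0 < type_variance F ->
  (* x^u(theta) = k theta + d is the (unique) symmetric BNE of the affine relaxation *)
  sym_BNE_affine F al be a b c (fun t => k * t + d) ->
  (* fully active *)
  0 <= k * be + d ->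
  let xlo := k * be + d in
  let xhi := k * al + d in
  xhi <= al^-1 ->
  a <= b * al ->
  0 <= c * al ^+ 2 - 2 * b * al + a ->
  (forall y, xlo <= y <= xhi -> 0 <= 2^-1 - c * y + b * y ^+ 2) ->
  sym_BNE_trunc F al be a b c (fun t => k * t + d).
Proof.
Proof.
move=> b0 c0 al0 hab0 bec [hF _] _ haff hlo xlo xhi hxhi hab hc hmin.
have mI : measurable (`[al, be]%classic : set R) by exact: measurable_itv.
set I := (`[al, be]%classic : set R) in mI.
pose G x := Rintegral F I (fun t => Pwin a b c x (k * t + d)).
pose H x := Rintegral F I (fun t => Pbar a b c x (k * t + d)).
have intG : forall x, F.-integrable I (EFin \o (fun t => Pwin a b c x (k * t + d))).
  move=> x; have [M hM] := pw_bnd a b c k d al be x (ltW al0).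
  by have [i _] := @decomp R F al be hF _ M 0 (pw_meas a b c k d x) hM.
have intH : forall x, F.-integrable I (EFin \o (fun t => Pbar a b c x (k * t + d))).
  move=> x; have hM : forall t, al <= t <= be -> `|Pbar a b c x (k * t + d)| <= 1.
    by move=> t _; exact: pb_bnd.
  by have [i _] := @decomp R F al be hF _ 1 0 (pb_meas a b c k d x) hM.
have payA : forall th x, payoff_aff F a b c (fun t => k * t + d) th x = G x - th * x.
  move=> th x; rewrite /payoff_aff; have [M hM] := pw_bnd a b c k d al be x (ltW al0).
  by have [_ ->] := @decomp R F al be hF _ M (th * x) (pw_meas a b c k d x) hM.
have payT : forall th x, payoff_trunc F a b c (fun t => k * t + d) th x = H x - th * x.
  move=> th x; rewrite /payoff_trunc; have hM : forall t, al <= t <= be -> `|Pbar a b c x (k * t + d)| <= 1.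
    by move=> t _; exact: pb_bnd.
  by have [_ ->] := @decomp R F al be hF _ 1 (th * x) (pb_meas a b c k d x) hM.
have rng : forall t, al <= t <= be -> xlo <= k * t + d <= xhi.
  move: hab0; rewrite le_eqVlt => /orP[/eqP e|lt].
    move=> t /andP[h1 h2]; rewrite -e in h2; have et : t = al by apply/eqP; rewrite eq_le h1 h2.
    by rewrite /xlo /xhi -e et lexx.
  have k0 : k <= 0.
    have h1 := haff al _ (k * be + d); have h2 := haff be _ (k * al + d).
    rewrite /= !payA in h1 h2.
    have h1' := h1 ltac:(by rewrite lexx ltW).
    have h2' := h2 ltac:(by rewrite lexx ltW).
    have e : k * (be - al) ^+ 2 <= 0 by lra.
    have sq : 0 < (be - al) ^+ 2 by rewrite exprn_gt0 // subr_gt0.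
    by move: e; rewrite pmulr_lle0.
  move=> t /andP[h1 h2]; rewrite /xlo /xhi; apply/andP; split; nra.
have Zpos : 0 < al^-1 by rewrite invr_gt0.
have inZ : forall y, xlo <= y <= xhi -> 0 <= y <= al^-1.
  move=> y /andP[h1 h2]; apply/andP; split; first exact: le_trans h1.
  exact: le_trans hxhi.
have P0 : forall y, xlo <= y <= xhi -> 0 <= Pwin a b c 0 y.
  move=> y hy; have := hmin y hy.
  by have -> : Pwin a b c 0 y = 2^-1 - c * y + b * y ^+ 2 by rewrite /Pwin; ring.
have bl0 : 0 < b by [].
move=> th hth; split.
  by have /andP[h1 _] := rng th hth; exact: le_trans h1.
set xs := k * th + d.
have hxs : xlo <= xs <= xhi by exact: rng.
move=> x x0; rewrite !payT.
have GH : H xs = G xs.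
  apply: eq_Rintegral => t /set_mem /inI ht.
  have hy := rng t ht.
  rewrite /Pbar Pbar_eq //; apply/andP; split.
    exact: (Pwin_ge0 b0 al0 hab hc (inZ _ hxs) (inZ _ hy) (P0 _ hy)).
  rewrite Pwin_swap lerBlDr lerDl.
  exact: (Pwin_ge0 b0 al0 hab hc (inZ _ hy) (inZ _ hxs) (P0 _ hxs)).
have haffx := haff th hth.
rewrite /= -/xs in haffx.
rewrite GH.
have [xZ|Zx] := leP x al^-1.
  have HG : H x <= G x.
    apply: le_Rintegral => // t /inI ht.
    have hy := rng t ht.
    apply: Pbar_le.
    by apply: (Pwin_ge0 b0 al0 hab hc _ (inZ _ hy) (P0 _ hy)); rewrite x0 xZ.
  have := haffx x; rewrite !payA; lra.
have H1 : H x <= 1.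
  have -> : (1 : R) = Rintegral F I (fun _ => 1).
    by rewrite Rintegral_cst //; move: hF => /= ->; rewrite mul1r.
  apply: le_Rintegral => //; first exact: finite_measure_integrable_cst.
  move=> t _; have /andP[_ h] := Pbar_bnd (Pwin a b c x (k * t + d)).
  exact: h.
have G0 : 0 <= G 0.
  apply: Rintegral_ge0 => t /inI ht.
  exact: P0 (rng t ht).
have thx : 1 < th * x.
  have : al * al^-1 < al * x by rewrite ltr_pM2l.
  rewrite mulfV ?gt_eqF // => h; apply: lt_le_trans h _.
  by rewrite ler_wpM2r //; case/andP: hth.
have := haffx 0; rewrite !payA; lra.
Qed.
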